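(* Let $k$ be a positive integer and let $\mathcal{A}$ be a monotone decreasing family of subsets of $\{0,1,\ldots,k-1\}$ (i.e., every subset of a member of $\mathcal{A}$ is also a member of $\mathcal{A}$). Let $$A=\{3^{a_1}+3^{a_2}+\cdots+3^{a_n}\mid \{a_1,a_2,\ldots,a_n\}\in \mathcal{A}\}.$$ Then the Stanley sequences $S(A\cup \{3^k\})$ and $S(A\cup \{2\cdot 3^k\})$ are independent.
   Context: A set of non-negative integers is 3-free if no three of its elements form an arithmetic progression. For a finite 3-free set $A=\{a_0<a_1<\cdots<a_k\}$ of non-negative integers, the Stanley sequence $S(A)=(a_n)_{n\ge 0}$ is the increasing sequence whose initial terms are $a_0,\ldots,a_k$ and in which, once $a_n$ is defined, $a_{n+1}$ is the smallest integer greater than $a_n$ such that $\{a_0,\ldots,a_{n+1}\}$ is 3-free. A Stanley sequence $(a_n)$ is independent if there is a constant $\lambda$ (its character) such that for all sufficiently large $k$, $a_{2^k+i}=a_{2^k}+a_i$ for all $0\le i<2^k$, and $a_{2^k}=2a_{2^k-1}-\lambda+1$. *)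

(* Defs.v *)
From mathcomp Require Import all_boot all_order all_algebra.
Import GRing.Theory.
Set Implicit Arguments. Unset Strict Implicit. Unset Printing Implicit Defensive.

Definition three_free (s : seq nat) : bool :=
  all (fun x => all (fun y => all (fun z =>
    ~~ ((x < y < z) && (x + z == y.*2))) s) s) s.

(* The search is
   over m in (l, 2l+2], which always contains such an m (e.g. 2l+1). *)
Definition next_term (s : seq nat) : nat :=
  let l := last 0 s in
  l.+1 + find (fun j => three_free (rcons s (l.+1 + j))) (iota 0 l.+2).

Definition extend (s : seq nat) (n : nat) : seq nat :=
  iter n (fun t => rcons t (next_term t)) s.

Definition stanley (A : seq nat) (n : nat) : nat :=
  nth 0 (extend (sort leq (undup A)) n.+1) n.

Definition independent (a : nat -> nat) : Prop :=
  exists (lambda : int) (K : nat), forall k, K <= k ->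
    (forall i, i < 2 ^ k -> a (2 ^ k + i) = a (2 ^ k) + a i) /\
    Posz (a (2 ^ k)) = (2 * Posz (a (2 ^ k - 1)%N) - lambda + 1)%R.

Definition down_closed (k : nat) (F : {set {set 'I_k}}) : Prop :=
  forall X Y : {set 'I_k}, X \in F -> Y \subset X -> Y \in F.

Definition ternary_set (k : nat) (F : {set {set 'I_k}}) : seq nat :=
  [seq (\sum_(a in X) 3 ^ (nat_of_ord a))%N | X : {set 'I_k} in F].

(* Main.v *)
Require Import Defs.
From mathcomp Require Import all_boot all_order all_algebra zify.
Set Implicit Arguments. Unset Strict Implicit. Unset Printing Implicit Defensive.

Definition D (i n : nat) : nat := n %/ 3 ^ i %% 3.
Definition inT (n : nat) : bool := all (fun i => D i n < 2) (iota 0 n.+1).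

Lemma D_big i n : n < 3 ^ i -> D i n = 0.
Proof. by move=> h; rewrite /D divn_small. Qed.

Lemma inTP n : reflect (forall i, D i n < 2) (inT n).
Proof.
apply: (iffP allP) => [h i|h i _]; last exact: h.
case: (ltnP i n.+1) => hi; first by apply: h; rewrite mem_iota.
rewrite D_big //; apply: leq_trans (ltn_expl i (isT : 1 < 3)); exact: ltnW.
Qed.

Lemma D0 n : D 0 n = n %% 3.
Proof. by rewrite /D expn0 divn1. Qed.

Lemma DS i n : D i.+1 n = D i (n %/ 3).
Proof. by rewrite /D expnS divnMA. Qed.

Lemma inT_div n : inT n = (n %% 3 < 2) && inT (n %/ 3).
Proof.
apply/inTP/andP => [h|[h1 /inTP h2] [|i]]; last by rewrite DS.
  by split; [rewrite -D0 | apply/inTP => i; rewrite -DS].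
by rewrite D0.
Qed.

Lemma inT_rec r a : r < 3 -> inT (r + 3 * a) = (r < 2) && inT a.
Proof.
move=> hr; rewrite inT_div.
have -> : (r + 3 * a) %% 3 = r by lia.
have -> : (r + 3 * a) %/ 3 = a by lia.
by [].
Qed.

Lemma inT0 : inT 0. Proof. by []. Qed.

Lemma T3free b : forall a c, inT a -> inT b -> inT c -> a + c = 2 * b -> a = b.
Proof.
elim/ltn_ind: b => b IH a c ha hb hc e.
case: (posnP b) => [b0|bp]; first by subst; lia.
move: ha hb hc; rewrite (inT_div a) (inT_div b) (inT_div c).
move=> /andP[ra ha] /andP[rb hb] /andP[rc hc].
have e1 : a %/ 3 + c %/ 3 = 2 * (b %/ 3) by lia.
have := IH (b %/ 3) ltac:(lia) _ _ ha hb hc e1.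
lia.
Qed.

Lemma inT_split m : inT m = (m %% 3 < 2) && inT (m %/ 3).
Proof. exact: inT_div. Qed.

Lemma Tcover m : exists a b, [/\ inT a, inT b, a + m = 2 * b, b <= m &
   forall i, D i a <= D i b].
Proof.
elim/ltn_ind: m => m IH.
case: (posnP m) => [->|mp]; first by exists 0, 0; split => //.
have [a [b [ha hb e hbm hd]]] := IH (m %/ 3) ltac:(lia).
have hm := divn_eq m 3.
have : m %% 3 < 3 by rewrite ltn_mod.
case: (m %% 3) hm => [|[|[|r]]] // hm _.
- exists (0 + 3 * a), (0 + 3 * b); rewrite !inT_rec //; split => //; try lia.
  case=> [|i]; rewrite ?D0 ?DS; first by lia.
  have E1 : (0 + 3 * a) %/ 3 = a by lia.
  have E2 : (0 + 3 * b) %/ 3 = b by lia.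
  by rewrite E1 E2.
- exists (1 + 3 * a), (1 + 3 * b); rewrite !inT_rec //; split => //; try lia.
  case=> [|i]; rewrite ?D0 ?DS; first by lia.
  have E1 : (1 + 3 * a) %/ 3 = a by lia.
  have E2 : (1 + 3 * b) %/ 3 = b by lia.
  by rewrite E1 E2.
- exists (0 + 3 * a), (1 + 3 * b); rewrite !inT_rec //; split => //; try lia.
  case=> [|i]; rewrite ?D0 ?DS; first by lia.
  have E1 : (0 + 3 * a) %/ 3 = a by lia.
  have E2 : (1 + 3 * b) %/ 3 = b by lia.
  by rewrite E1 E2.
Qed.

Lemma Todd_strict m : 0 < m -> exists a b, [/\ inT a, inT b, a + m = 2 * b + 1 & b < m].
Proof.
elim/ltn_ind: m => m IH mp.
have hm := divn_eq m 3.
have : m %% 3 < 3 by rewrite ltn_mod.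
case: (m %% 3) hm => [|[|[|r]]] // hm _.
- have [a [b [ha hb e hbm]]] := IH (m %/ 3) ltac:(lia) ltac:(lia).
  exists (0 + 3 * a), (1 + 3 * b); rewrite !inT_rec //; split => //; lia.
- have [a [b [ha hb e hbm _]]] := Tcover (m %/ 3).
  exists (0 + 3 * a), (0 + 3 * b); rewrite !inT_rec //; split => //; lia.
- have [a [b [ha hb e hbm _]]] := Tcover (m %/ 3).
  exists (1 + 3 * a), (1 + 3 * b); rewrite !inT_rec //; split => //; lia.
Qed.

Lemma Todd m : exists a b, [/\ inT a, inT b, a + m = 2 * b + 1 & b <= m].
Proof.
case: (posnP m) => [->|mp]; first by exists 1, 0.
have [a [b [ha hb e hbm]]] := Todd_strict mp.
by exists a, b; split => //; lia.
Qed.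

Lemma inT_top p h r : h < 3 ^ p -> r < 3 -> inT (h + 3 ^ p * r) = inT h && (r < 2).
Proof.
elim: p h => [|p IH] h hh hr.
  rewrite expn0 in hh; have -> : h = 0 by lia.
  rewrite expn0 mul1n add0n; have := inT_rec 0 hr; rewrite muln0 addn0 => ->.
  by rewrite andbC.
have hh' : h %/ 3 < 3 ^ p by rewrite expnS in hh; lia.
have -> : h + 3 ^ p.+1 * r = h %% 3 + 3 * (h %/ 3 + 3 ^ p * r).
  by rewrite expnS {1}(divn_eq h 3); lia.
rewrite inT_rec ?ltn_mod // IH // (inT_div h).
by rewrite andbA.
Qed.

Lemma inT_bound k w : inT w -> w < 3 ^ k -> 2 * w < 3 ^ k.
Proof.
elim: k w => [|k IH] w hw hk.
  by rewrite expn0 in hk *; lia.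
move: hw; rewrite inT_div => /andP[hr hw].
have := IH _ hw ltac:(rewrite expnS in hk; lia).
rewrite expnS (divn_eq w 3); lia.
Qed.

Lemma inT_mod2 n : n %% 3 = 2 -> inT n = false.
Proof. by move=> h; rewrite inT_div h. Qed.

Lemma sum_rec k (c : nat -> nat) :
  \sum_(i < k.+1) c i * 3 ^ i = c 0 + 3 * \sum_(i < k) c i.+1 * 3 ^ i.
Proof.
rewrite big_ord_recl /= expn0 muln1 big_distrr /=; congr (_ + _).
by apply: eq_bigr => i _; rewrite /bump /= add1n expnS mulnCA.
Qed.

Lemma sum_lt k (c : nat -> nat) : (forall i, c i < 3) -> \sum_(i < k) c i * 3 ^ i < 3 ^ k.
Proof.
elim: k c => [|k IH] c hc; first by rewrite big_ord0.
rewrite sum_rec expnS; have := IH (fun i => c i.+1) (fun i => hc i.+1).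
have := hc 0; lia.
Qed.

Lemma D_sum k (c : nat -> nat) j : (forall i, c i < 3) ->
  D j (\sum_(i < k) c i * 3 ^ i) = if j < k then c j else 0.
Proof.
elim: k c j => [|k IH] c j hc; first by rewrite big_ord0 /D div0n mod0n; case: j.
rewrite sum_rec; case: j => [|j].
  rewrite D0 /=; have := hc 0; set s := \sum_(_ < _) _; lia.
rewrite DS; set s := \sum_(_ < _) _.
have -> : (c 0 + 3 * s) %/ 3 = s by have := hc 0; lia.
by rewrite /s (IH (fun i => c i.+1)).
Qed.

Lemma expand k n : n < 3 ^ k -> n = \sum_(i < k) D i n * 3 ^ i.
Proof.
elim: k n => [|k IH] n hn; first by rewrite big_ord0; rewrite expn0 in hn; lia.
rewrite (sum_rec k (fun i => D i n)) /= D0.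
have -> : \sum_(i < k) D i.+1 n * 3 ^ i = \sum_(i < k) D i (n %/ 3) * 3 ^ i.
  by apply: eq_bigr => i _; rewrite DS.
rewrite -IH; first by rewrite {1}(divn_eq n 3); lia.
by rewrite expnS in hn; lia.
Qed.

Definition cX k (X : {set 'I_k}) (i : nat) : nat :=
  [exists a : 'I_k, (nat_of_ord a == i) && (a \in X)].

Lemma cX_ord k (X : {set 'I_k}) (a : 'I_k) : cX X a = (a \in X).
Proof.
rewrite /cX; congr nat_of_bool; apply/existsP/idP => [[b /andP[/eqP/val_inj -> //]]|h].
by exists a; rewrite eqxx.
Qed.

Lemma cX_lt k (X : {set 'I_k}) i : cX X i < 2.
Proof. by rewrite /cX; case: existsP. Qed.

Lemma valX k (X : {set 'I_k}) :
  (\sum_(a in X) 3 ^ a)%N = \sum_(i < k) cX X i * 3 ^ i.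
Proof.
rewrite big_mkcond /=; apply: eq_bigr => a _; rewrite cX_ord.
by case: (a \in X); rewrite ?mul1n ?mul0n.
Qed.

Lemma D_valX k (X : {set 'I_k}) j :
  D j (\sum_(a in X) 3 ^ a)%N = if j < k then cX X j else 0.
Proof.
rewrite valX D_sum // => i; have := cX_lt X i; lia.
Qed.

Lemma ternP k (F : {set {set 'I_k}}) x :
  reflect (exists2 X, X \in F & x = (\sum_(a in X) 3 ^ a)%N) (x \in ternary_set F).
Proof.
apply: (iffP imageP) => [[X hX ->]|[X hX ->]]; by exists X.
Qed.

Lemma F1 k (F : {set {set 'I_k}}) x : x \in ternary_set F -> x < 3 ^ k /\ inT x.
Proof.
case/ternP => X _ ->; split.
  rewrite valX; apply: sum_lt => i; have := cX_lt X i; lia.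
apply/inTP => i; rewrite D_valX; case: ifP => // _; exact: cX_lt.
Qed.

Lemma F2 k (F : {set {set 'I_k}}) : F != set0 -> down_closed F -> 0 \in ternary_set F.
Proof.
case/set0Pn => X hX dc; apply/ternP; exists set0.
  by apply: (dc X) => //; exact: sub0set.
by rewrite big_set0.
Qed.

Lemma F3 k (F : {set {set 'I_k}}) a b : down_closed F ->
  (forall i, D i a <= D i b) -> inT a -> a < 3 ^ k ->
  b \in ternary_set F -> a \in ternary_set F.
Proof.
move=> dc hd /inTP ha hak /ternP [X1 hX1 hb].
apply/ternP; exists [set i : 'I_k | D i a == 1].
  apply: (dc X1) => //; apply/subsetP => i; rewrite inE => /eqP hi.
  have := hd i; rewrite hb D_valX ltn_ord cX_ord hi.
  by case: (i \in X1).
rewrite valX {1}(expand hak); apply: eq_bigr => i _; rewrite cX_ord inE.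
by have := ha i; case: (D i a) => [|[|]].
Qed.

Definition L (P : pred nat) (M : nat) : seq nat := [seq x <- iota 0 M | P x].

Lemma L_add P M n : L P (M + n) = L P M ++ [seq x <- iota M n | P x].
Proof. by rewrite /L iotaD filter_cat. Qed.

Lemma mem_L P M x : (x \in L P M) = (x < M) && P x.
Proof. by rewrite mem_filter mem_iota andbC. Qed.

Definition free3 (P : pred nat) := forall x y z, P x -> P y -> P z -> x < y -> y < z ->
  x + z = 2 * y -> False.
Definition covers (P : pred nat) (t : nat) := forall n, t < n -> ~~ P n ->
  exists x y, [/\ P x, P y, x < y, y < n & x + n = 2 * y].

Lemma three_free_all (P : pred nat) s : free3 P -> all P s -> three_free s.
Proof.
move=> h3 /allP hs; apply/allP => x hx; apply/allP => y hy; apply/allP => z hz.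
apply/negP => /andP[/andP[xy yz] /eqP e].
by apply: (h3 x y z (hs _ hx) (hs _ hy) (hs _ hz) xy yz); rewrite e -mul2n.
Qed.

Lemma three_free_not s x y z : x \in s -> y \in s -> z \in s -> x < y -> y < z ->
  x + z = 2 * y -> ~~ three_free s.
Proof.
move=> hx hy hz xy yz e; apply/negP => /allP /(_ x hx) /allP /(_ y hy) /allP /(_ z hz).
by rewrite xy yz e -mul2n eqxx.
Qed.

Lemma step (P : pred nat) t M : free3 P -> covers P t -> t < M -> P M.-1 ->
  exists i, rcons (L P M) (next_term (L P M)) = L P (M + i.+1) /\ P (M + i).
Proof.
move=> h3 hc tM hM.
have M0 : 0 < M by lia.
have hlast : last 0 (L P M) = M.-1.
  have -> : M = M.-1 + 1 by lia.
  by rewrite L_add /= hM last_cat /= addn1.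
have ex : exists j, (j < M) && P (M + j).
  case: (boolP (has (fun j => P (M + j)) (iota 0 M))) => [/hasP [j hj hPj]|hn].
    by exists j; rewrite hPj andbT; move: hj; rewrite mem_iota; lia.
  exfalso; have hn' : forall j, j < M -> ~~ P (M + j).
    by move=> j hj; apply: (hasPn hn); rewrite mem_iota.
  have [x [y [px py xy ym e]]] := hc (M + M.-1) ltac:(lia) (hn' M.-1 ltac:(lia)).
  case: (ltnP y M) => hyM; first by lia.
  have := hn' (y - M) ltac:(lia); rewrite subnKC //; by rewrite py.
pose Q := fun j => (j < M) && P (M + j).
have [i0 hi0 hmin] := ex_minnP ex.
move: hi0 => /andP[i0M Pi0].
have hnot : forall j, j < i0 -> ~~ P (M + j).
  move=> j hj; apply/negP => hp; have := hmin j; rewrite hp andbT; lia.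
exists i0; split => //.
have hnt : next_term (L P M) = M + i0.
  rewrite /next_term hlast prednK //; congr (_ + _).
  set R := (fun j => _).
  have hR : forall j, j <= i0 -> R j = (j == i0).
    move=> j hj; rewrite /R; case: eqP => [->|hne].
      apply: (three_free_all h3); rewrite all_rcons Pi0 /=.
      by apply/allP => x; rewrite mem_L => /andP[].
    have hj' : j < i0 by lia.
    have [x [y [px py xy ym e]]] := hc (M + j) ltac:(lia) (hnot _ hj').
    have yM : y < M.
      case: (ltnP y M) => // hyM; have := hnot (y - M) ltac:(lia).
      by rewrite subnKC // py.
    apply/negbTE; apply: (three_free_not (x := x) (y := y) (z := M + j)) => //.
    - by rewrite mem_rcons inE mem_L px andbT; apply/orP; right; lia.
    - by rewrite mem_rcons inE mem_L py andbT; apply/orP; right.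
    - by rewrite mem_rcons inE eqxx.
  have hs : i0 < size (iota 0 M.+1) by rewrite size_iota; lia.
  have hhas : has R (iota 0 M.+1).
    by apply/hasP; exists i0; [rewrite mem_iota; lia | rewrite hR].
  case: (ltngtP (find R (iota 0 M.+1)) i0) => // hf.
  - have := nth_find 0 hhas; rewrite nth_iota; last by lia.
    by rewrite add0n hR ?(ltn_eqF hf) //; lia.
  - have := before_find 0 hf; rewrite nth_iota; last by lia.
    by rewrite add0n hR // eqxx.
have -> : M + i0.+1 = (M + i0) + 1 by lia.
rewrite hnt L_add (L_add P M i0) -catA -cats1; congr (_ ++ _).
have -> : [seq x <- iota M i0 | P x] = [::].
  rewrite -(filter_pred0 (iota M i0)); apply: eq_in_filter => x.
  rewrite mem_iota => /andP[h1 h2]; have := hnot (x - M) ltac:(lia).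
  by rewrite subnKC // => /negbTE.
by rewrite /= Pi0.
Qed.

Lemma extend_L (P : pred nat) t init : free3 P -> covers P t -> P t ->
  init = L P t.+1 -> forall n, exists M,
  [/\ extend init n = L P M, t < M, P M.-1 & size (L P M) = size init + n].
Proof.
move=> h3 hc ht hi; elim=> [|n [M [e tM hM hs]]].
  by exists t.+1; split => //; rewrite ?addn0 ?hi.
have [i [e2 hP]] := step h3 hc tM hM.
exists (M + i.+1); split.
- by rewrite /extend iterS -/(extend init n) e.
- lia.
- by rewrite addnS /=.
- by rewrite -e2 size_rcons hs addnS.
Qed.

Lemma L_prefix P M M' : M <= M' -> L P M' = L P M ++ [seq x <- iota M (M' - M) | P x].
Proof. by move=> h; rewrite -L_add subnKC. Qed.

Lemma nth_L_stable P M M' n : n < size (L P M) -> n < size (L P M') ->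
  nth 0 (L P M) n = nth 0 (L P M') n.
Proof.
wlog h : M M' / M <= M'.
  move=> W h1 h2; case: (leqP M M') => hm; first exact: W.
  by symmetry; apply: W => //; lia.
by move=> h1 _; rewrite (L_prefix P h) nth_cat h1.
Qed.

Lemma stanley_L (P : pred nat) t A : free3 P -> covers P t -> P t ->
  sort leq (undup A) = L P t.+1 ->
  forall n M, n < size (L P M) -> stanley A n = nth 0 (L P M) n.
Proof.
move=> h3 hc ht hi n M hn.
have [M' [e _ _ hs]] := extend_L h3 hc ht hi n.+1.
rewrite /stanley e; apply: nth_L_stable => //; rewrite hs; lia.
Qed.

Lemma L_double (P : pred nat) Q : (forall x, x < Q -> P (Q + x) = P x) ->
  L P (Q + Q) = L P Q ++ map (addn Q) (L P Q).
Proof.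
move=> hp; rewrite L_add; congr (_ ++ _).
rewrite -{1}(addn0 Q) iotaDl filter_map /L; congr map.
by apply: eq_in_filter => x; rewrite mem_iota => /andP[_ h]; rewrite /preim /= hp.
Qed.

Lemma L_empty (P : pred nat) M n : (forall x, x < n -> P (M + x) = false) ->
  L P (M + n) = L P M.
Proof.
move=> hp; rewrite L_add -[RHS]cats0; congr (_ ++ _).
rewrite -(filter_pred0 (iota M n)); apply: eq_in_filter => x.
by rewrite mem_iota => /andP[h1 h2]; have := hp (x - M) ltac:(lia); rewrite subnKC.
Qed.

Lemma indep_gen (P : pred nat) (e : nat -> nat) N m :
  (forall n M, n < size (L P M) -> e n = nth 0 (L P M) n) ->
  (forall j x, x < N * 3 ^ j -> P (N * 3 ^ j + x) = P x) ->
  (forall j x, x < N * 3 ^ j -> P (N * 3 ^ j + N * 3 ^ j + x) = false) ->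
  size (L P N) = 2 ^ m -> P 0 -> 0 < N ->
  independent e.
Proof.
move=> he p1 p2 p3 P0 N0.
have L3 : forall j, L P (N * 3 ^ j.+1) = L P (N * 3 ^ j) ++ map (addn (N * 3 ^ j)) (L P (N * 3 ^ j)).
  move=> j.
  have -> : N * 3 ^ j.+1 = (N * 3 ^ j + N * 3 ^ j) + N * 3 ^ j by rewrite expnS; lia.
  rewrite L_empty; first by apply: L_double => x hx; exact: p1.
  exact: p2.
have sz : forall j, size (L P (N * 3 ^ j)) = 2 ^ (m + j).
  elim=> [|j IH]; first by rewrite expn0 muln1 addn0.
  by rewrite L3 size_cat size_map IH addnS expnS; lia.
have e1 : forall j i, i < 2 ^ (m + j) -> e (2 ^ (m + j) + i) = N * 3 ^ j + e i.
  move=> j i hi.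
  rewrite (he _ (N * 3 ^ j.+1)); last by rewrite L3 size_cat size_map sz; lia.
  rewrite (he _ (N * 3 ^ j)); last by rewrite sz.
  rewrite L3 nth_cat sz ltnNge leq_addr /= addKn (nth_map 0) //.
  by rewrite sz.
have e0 : e 0 = 0.
  rewrite (he 0 N); last by rewrite p3 expn_gt0.
  have -> : N = 1 + (N - 1) by lia.
  by rewrite L_add /L /= P0.
have e2 : forall j, e (2 ^ (m + j)) = N * 3 ^ j.
  by move=> j; rewrite -(addn0 (2 ^ (m + j))) e1 ?e0 ?addn0 // expn_gt0.
have lam : forall j, 2 * e (2 ^ (m + j) - 1) + N = N * 3 ^ j + 2 * e (2 ^ m - 1).
  elim=> [|j IH]; first by rewrite addn0 expn0 muln1; lia.
  have -> : 2 ^ (m + j.+1) - 1 = 2 ^ (m + j) + (2 ^ (m + j) - 1).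
    by rewrite addnS expnS; have := expn_gt0 2 (m + j); lia.
  rewrite e1; last by have := expn_gt0 2 (m + j); lia.
  rewrite expnS; lia.
exists ((2 * e (2 ^ m - 1)%N + 1)%N%:Z - N%:Z)%R, m => k hk.
have -> : k = m + (k - m) by lia.
split; first by move=> i hi; rewrite e1 // e2.
rewrite e2; have := lam (k - m); lia.
Qed.

Definition U3 (U : pred nat) := forall a b c, U a -> U b -> U c -> a + c = 2 * b -> a = b.
Definition cov (X Y : pred nat) h := exists a b, [/\ X a, Y b, a + h = 2 * b & b <= h].
Definition per (U : pred nat) := forall p h, 1 < p -> h < 3 ^ p ->
  U (3 ^ p + h) = U h /\ U (3 ^ p + 3 ^ p + h) = false.
Record good (UA UD : pred nat) (ht : nat) : Prop := Good {
 g_3A : U3 UA; g_3D : U3 UD;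
 g_cov : forall h, ht <= h -> [/\ cov UA UA h, cov UD UD h & cov UA UD h];
 g_A0 : UA 0; g_At : UA ht; g_Alow : forall h, 0 < h -> h < ht -> UA h = false;
 g_Dlow : forall h, h < ht -> UD h = false; g_ht : 0 < ht;
 g_perA : per UA; g_perD : per UD;
 g_cA : count UA (iota 0 9) = 4; g_cD : count UD (iota 0 9) = 4 }.

Definition inS k (F : {set {set 'I_k}}) (UA UD : pred nat) (n : nat) : bool :=
  inT (n %% 3 ^ k) && (if n %% 3 ^ k \in ternary_set F then UA (n %/ 3 ^ k)
                       else UD (n %/ 3 ^ k)).

Lemma divmod_uniq a b c d K : a < K -> c < K -> a + K * b = c + K * d -> a = c /\ b = d.
Proof.
move=> ha hc e.
have hb : b = d.
  case: (ltngtP b d) => // h.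
  - have : K * b.+1 <= K * d by rewrite leq_mul2l h orbT.
    rewrite mulnS; lia.
  - have : K * d.+1 <= K * b by rewrite leq_mul2l h orbT.
    rewrite mulnS; lia.
by subst; split => //; lia.
Qed.

Lemma K_dec n K : 0 < K -> n = n %% K + K * (n %/ K).
Proof. by move=> _; rewrite mulnC addnC -divn_eq. Qed.

Lemma inS_dec k (F : {set {set 'I_k}}) (UA UD : pred nat) w h : w < 3 ^ k ->
  inS F UA UD (w + 3 ^ k * h) =
  inT w && (if w \in ternary_set F then UA h else UD h).
Proof.
move=> hw; rewrite /inS.
have K0 : 0 < 3 ^ k by rewrite expn_gt0.
have -> : (w + 3 ^ k * h) %% 3 ^ k = w by rewrite addnC mulnC modnMDl modn_small.
have -> : (w + 3 ^ k * h) %/ 3 ^ k = h by rewrite addnC mulnC divnMDl // divn_small // addn0.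
by [].
Qed.

Definition cls k (F : {set {set 'I_k}}) (UA UD : pred nat) w :=
  if w \in ternary_set F then UA else UD.

Lemma good_free3 k (F : {set {set 'I_k}}) UA UD ht : good UA UD ht -> free3 (@inS k F UA UD).
Proof.
move=> G x y z.
have K0 : 0 < 3 ^ k by rewrite expn_gt0.
rewrite (K_dec x K0) (K_dec y K0) (K_dec z K0).
have ltx := ltn_pmod x K0; have lty := ltn_pmod y K0; have ltz := ltn_pmod z K0.
set wx := x %% _; set wy := y %% _; set wz := z %% _.
set hx := x %/ _; set hy := y %/ _; set hz := z %/ _.
rewrite !inS_dec //.
move=> /andP[tx ux] /andP[ty uy] /andP[tz uz] xy yz e.
have bx := inT_bound tx ltx; have by_ := inT_bound ty lty; have bz := inT_bound tz ltz.
have e' : (wx + wz) + 3 ^ k * (hx + hz) = 2 * wy + 3 ^ k * (2 * hy) by lia.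
have [ew eh] : wx + wz = 2 * wy /\ hx + hz = 2 * hy.
  by apply: (divmod_uniq _ _ e'); lia.
have wxy := T3free tx ty tz ew.
have wzy : wz = wy by lia.
rewrite -wxy in uy; rewrite wzy -wxy in uz.
have : hx = hy.
  move: ux uy uz; case: (wx \in ternary_set F) => ux uy uz.
  - exact: (g_3A G ux uy uz).
  - exact: (g_3D G ux uy uz).
lia.
Qed.

Lemma good_covers k (F : {set {set 'I_k}}) UA UD ht : good UA UD ht -> down_closed F ->
  covers (inS F UA UD) (3 ^ k * ht).
Proof.
move=> G dc n tn hn.
have K0 : 0 < 3 ^ k by rewrite expn_gt0.
move: tn hn; rewrite (K_dec n K0).
have ltw := ltn_pmod n K0.
set w := n %% _; set h := n %/ _ => tn hn.
have hh : ht <= h.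
  case: (leqP ht h) => // hlt.
  have : 3 ^ k * h.+1 <= 3 ^ k * ht by rewrite leq_mul2l hlt orbT.
  rewrite mulnS; lia.
have [a [b [ta tb e hbw hd]]] := Tcover w.
have alt : a < 3 ^ k by lia.
have blt : b < 3 ^ k by lia.
have [cAA cDD cAD] := g_cov G hh.
have [ha [hb [ua ub eh hbh]]] : exists ha hb,
  [/\ (if a \in ternary_set F then UA else UD) ha,
      (if b \in ternary_set F then UA else UD) hb, ha + h = 2 * hb & hb <= h].
  case bA : (b \in ternary_set F).
    by rewrite (F3 dc hd ta alt bA).
  by case: (a \in ternary_set F).
have Sx : inS F UA UD (a + 3 ^ k * ha) by rewrite inS_dec // ta /=; move: ua; case: (a \in _).
have Sy : inS F UA UD (b + 3 ^ k * hb) by rewrite inS_dec // tb /=; move: ub; case: (b \in _).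
have ey : (a + 3 ^ k * ha) + (w + 3 ^ k * h) = 2 * (b + 3 ^ k * hb) by nia.
have yle : b + 3 ^ k * hb <= w + 3 ^ k * h.
  by apply: leq_add => //; rewrite leq_mul2l hbh orbT.
have yne : b + 3 ^ k * hb != w + 3 ^ k * h.
  by apply/eqP => ey'; move: hn; rewrite -ey' Sy.
exists (a + 3 ^ k * ha), (b + 3 ^ k * hb); split => //; lia.
Qed.

Lemma good_t k (F : {set {set 'I_k}}) UA UD ht : good UA UD ht -> F != set0 -> down_closed F ->
  inS F UA UD (3 ^ k * ht).
Proof.
move=> G F0 dc; rewrite -(add0n (3 ^ k * ht)) inS_dec ?expn_gt0 // inT0 F2 //.
exact: g_At G.
Qed.

Lemma good_init k (F : {set {set 'I_k}}) UA UD ht : good UA UD ht -> F != set0 -> down_closed F ->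
  sort leq (undup (rcons (ternary_set F) (3 ^ k * ht))) = L (inS F UA UD) (3 ^ k * ht).+1.
Proof.
move=> G F0 dc.
have K0 : 0 < 3 ^ k by rewrite expn_gt0.
have ht0 := g_ht G.
apply: (irr_sorted_eq ltn_trans ltnn).
- by rewrite ltn_sorted_uniq_leq sort_uniq undup_uniq sort_sorted //; exact: leq_total.
- by apply: sorted_filter; [exact: ltn_trans | exact: iota_ltn_sorted].
move=> x; rewrite mem_sort mem_undup mem_rcons inE mem_L.
apply/idP/idP.
  case/orP => [/eqP ->|hx]; first by rewrite ltnSn good_t.
  have [xk tx] := F1 hx.
  have -> : x = x + 3 ^ k * 0 by rewrite muln0 addn0.
  rewrite inS_dec // tx hx (g_A0 G) andbT.
  have : 3 ^ k <= 3 ^ k * ht by rewrite leq_pmulr.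
  lia.
move=> /andP[xt]; rewrite (K_dec x K0).
have ltw := ltn_pmod x K0.
move: xt; set w := x %% _; set h := x %/ _ => xt.
rewrite inS_dec // => /andP[tw uw].
case: (ltnP h ht) => hh.
  case: (posnP h) => h0.
    move: uw; rewrite h0 muln0 addn0; case: (w \in ternary_set F) => uw; first by rewrite orbT.
    by rewrite (g_Dlow G ht0) in uw.
  move: uw; case: (w \in ternary_set F) => uw.
    by rewrite (g_Alow G h0 hh) in uw.
  by rewrite (g_Dlow G hh) in uw.
have : 3 ^ k * ht <= 3 ^ k * h by rewrite leq_mul2l hh orbT.
move=> hle; apply/orP; left; apply/eqP.
have : w + 3 ^ k * h <= 3 ^ k * ht by lia.
have : 3 ^ k * ht <= 3 ^ k * h by [].
suff : h = ht by move=> ->; lia.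
apply/eqP; rewrite eqn_leq hh andbT.
by rewrite -(leq_pmul2l K0); lia.
Qed.

Lemma good_per k (F : {set {set 'I_k}}) UA UD ht : good UA UD ht ->
  (forall j x, x < 3 ^ k * 9 * 3 ^ j ->
     inS F UA UD (3 ^ k * 9 * 3 ^ j + x) = inS F UA UD x) /\
  (forall j x, x < 3 ^ k * 9 * 3 ^ j ->
     inS F UA UD (3 ^ k * 9 * 3 ^ j + 3 ^ k * 9 * 3 ^ j + x) = false).
Proof.
move=> G.
have K0 : 0 < 3 ^ k by rewrite expn_gt0.
have hN : forall j, 3 ^ k * 9 * 3 ^ j = 3 ^ k * 3 ^ j.+2.
  by move=> j; rewrite !expnS; lia.
have dec : forall j x, x < 3 ^ k * 3 ^ j.+2 ->
   x %/ 3 ^ k < 3 ^ j.+2.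
  by move=> j x hx; rewrite ltn_divLR // mulnC.
split => j x; rewrite hN => hx; have hh := dec j x hx;
  rewrite (K_dec x K0); have ltw := ltn_pmod x K0;
  move: hh; set w := x %% _; set h := x %/ _ => hh.
- have -> : 3 ^ k * 3 ^ j.+2 + (w + 3 ^ k * h) = w + 3 ^ k * (3 ^ j.+2 + h) by lia.
  rewrite !inS_dec //; case: (w \in ternary_set F).
  + by have [-> _] := g_perA G (isT : 1 < j.+2) hh.
  + by have [-> _] := g_perD G (isT : 1 < j.+2) hh.
- have -> : 3 ^ k * 3 ^ j.+2 + 3 ^ k * 3 ^ j.+2 + (w + 3 ^ k * h) =
     w + 3 ^ k * (3 ^ j.+2 + 3 ^ j.+2 + h) by lia.
  rewrite !inS_dec //; case: (w \in ternary_set F).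
  + by have [_ ->] := g_perA G (isT : 1 < j.+2) hh; rewrite andbF.
  + by have [_ ->] := g_perD G (isT : 1 < j.+2) hh; rewrite andbF.
Qed.

Lemma count_chunks (P : pred nat) K c :
  count P (iota 0 (K * c)) = sumn [seq count (fun w => P (w + K * h)) (iota 0 K) | h <- iota 0 c].
Proof.
elim: c => [|c IH]; first by rewrite muln0.
rewrite mulnS addnC iotaD count_cat IH add0n -{1}(addn0 (K * c)) iotaDl count_map.
rewrite -addn1 iotaD map_cat sumn_cat /= addn0 add0n; congr (_ + _).
by apply: eq_count => w; rewrite /preim /= addnC.
Qed.

Lemma count_if (p q : pred nat) (bA bD : bool) s :
  count (fun w => p w && (if q w then bA else bD)) s =
  bA * count (fun w => p w && q w) s + bD * count (fun w => p w && ~~ q w) s.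
Proof.
elim: s => [|x s IH] /=; first by rewrite !muln0.
rewrite IH; case: (p x); case: (q x); move: IH; case: bA; case: bD => /= _; lia.
Qed.

Lemma count_split (p q : pred nat) s :
  count (fun w => p w && q w) s + count (fun w => p w && ~~ q w) s = count p s.
Proof.
elim: s => [|x s IH] //=; rewrite -IH; case: (p x); case: (q x) => /=; lia.
Qed.

Lemma count_inT k : count inT (iota 0 (3 ^ k)) = 2 ^ k.
Proof.
elim: k => [|k IH]; first by [].
rewrite expnS mulnC count_chunks /=.
have E : forall r, r < 3 -> count (fun w => inT (w + 3 ^ k * r)) (iota 0 (3 ^ k)) =
   (r < 2) * count inT (iota 0 (3 ^ k)).
  move=> r hr.
  rewrite (@eq_in_count _ _ (fun w => inT w && (r < 2))); last first.
    by move=> w; rewrite mem_iota add0n => /andP[_ hw]; rewrite /= inT_top.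
  case: (r < 2); first by rewrite mul1n; apply: eq_count => w; rewrite andbT.
  by rewrite mul0n; apply/eqP; rewrite -leqn0 leqNgt -has_count; apply/hasPn => w; rewrite andbF.
rewrite !E // IH expnS; lia.
Qed.

Lemma count_sumn (P : pred nat) s : count P s = sumn (map (fun x => nat_of_bool (P x)) s).
Proof. by elim: s => //= x s ->. Qed.

Lemma sumn_lin (a b : nat -> nat) x y s :
  sumn [seq a h * x + b h * y | h <- s] = sumn (map a s) * x + sumn (map b s) * y.
Proof. elim: s => //= h s ->; lia. Qed.

Lemma good_count k (F : {set {set 'I_k}}) UA UD ht : good UA UD ht ->
  size (L (inS F UA UD) (3 ^ k * 9)) = 2 ^ (k + 2).
Proof.
move=> G.
have K0 : 0 < 3 ^ k by rewrite expn_gt0.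
rewrite /L size_filter count_chunks.
set cA := count (fun w => inT w && (w \in ternary_set F)) (iota 0 (3 ^ k)).
set cD := count (fun w => inT w && ~~ (w \in ternary_set F)) (iota 0 (3 ^ k)).
have E : forall h, count (fun w => inS F UA UD (w + 3 ^ k * h)) (iota 0 (3 ^ k)) =
   UA h * cA + UD h * cD.
  move=> h; rewrite -count_if; apply: eq_in_count => w.
  by rewrite mem_iota add0n => /andP[_ hw]; rewrite inS_dec.
have hs : cA + cD = 2 ^ k by rewrite count_split count_inT.
have hA := g_cA G; have hD := g_cD G.
rewrite (eq_map E) sumn_lin -!count_sumn hA hD expnD -hs.
clearbody cA cD; lia.
Qed.

Lemma good_indep k (F : {set {set 'I_k}}) UA UD ht : good UA UD ht ->
  F != set0 -> down_closed F ->
  independent (stanley (rcons (ternary_set F) (3 ^ k * ht))).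
Proof.
move=> G F0 dc.
have [p1 p2] := good_per F G.
apply: (indep_gen (P := inS F UA UD) (N := 3 ^ k * 9) (m := k + 2)).
- move=> n M hn; apply: (stanley_L _ _ _ _ hn).
  + exact: good_free3 G.
  + exact: good_covers G dc.
  + exact: good_t G F0 dc.
  + exact: good_init G F0 dc.
- exact: p1.
- exact: p2.
- exact: good_count G.
- by rewrite /inS mod0n div0n inT0 F2 // (g_A0 G).
- by rewrite muln_gt0 expn_gt0.
Qed.

Lemma inT_p1 p h : h < 3 ^ p -> inT (3 ^ p + h) = inT h.
Proof. by move=> hh; rewrite addnC -(muln1 (3 ^ p)) inT_top // andbT. Qed.

Lemma inT_p2 p h : h < 3 ^ p -> inT (3 ^ p + 3 ^ p + h) = false.
Proof.
move=> hh; have -> : 3 ^ p + 3 ^ p + h = h + 3 ^ p * 2 by lia.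
by rewrite inT_top // andbF.
Qed.

Lemma inT_bad1 n : n %% 3 = 1 -> (n %/ 3) %% 3 = 2 -> inT n = false.
Proof. by move=> h1 h2; rewrite inT_div (inT_mod2 h2) andbF. Qed.

Lemma U3_inT : U3 inT.
Proof. by move=> a b c ha hb hc e; exact: (T3free ha hb hc). Qed.

Definition UD1 (h : nat) : bool := (0 < h) && inT h.-1.

Lemma good1 : good inT UD1 1.
Proof.
split.
- exact: U3_inT.
- move=> a b c /andP[a0 ha] /andP[b0 hb] /andP[c0 hc] e.
  have := T3free ha hb hc ltac:(lia); lia.
- move=> h h1; split.
  + by have [a [b [ha hb e hbh _]]] := Tcover h; exists a, b.
  + have [a [b [ha hb e hbh _]]] := Tcover h.-1.
    by exists a.+1, b.+1; split => //; lia.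
  + have [a [b [ha hb e hbh]]] := Todd h.-1.
    by exists a, b.+1; split => //; lia.
- by [].
- by [].
- move=> h; lia.
- by case.
- by [].
- move=> p h hp hh; split; [exact: inT_p1 | exact: inT_p2].
- move=> p h hp hh; rewrite /UD1.
  have X0 : 0 < 3 ^ p.-1 by rewrite expn_gt0.
  have E : 3 ^ p = 3 * 3 ^ p.-1 by rewrite -expnS prednK //; lia.
  case: h hh => [|h] hh.
    rewrite !addn0 /= !inT_mod2 ?andbF //; rewrite E; lia.
  rewrite !addnS /= inT_p1 ?inT_p2 //; lia.
- by [].
- by [].
Qed.

Definition UA2 (h : nat) : bool := (h %% 3 != 1) && inT (h %/ 3).
Definition UD2 (h : nat) : bool := (1 < h) && inT (h - 2).

Lemma good2 : good UA2 UD2 2.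
Proof.
split.
- move=> a b c /andP[ra ha] /andP[rb hb] /andP[rc hc] e.
  have e' : a %/ 3 + c %/ 3 = 2 * (b %/ 3) by move: ra rb rc => /eqP ? /eqP ? /eqP ?; lia.
  have := T3free ha hb hc e'.
  move: ra rb rc => /eqP ? /eqP ? /eqP ?; lia.
- move=> a b c /andP[a0 ha] /andP[b0 hb] /andP[c0 hc] e.
  have := T3free ha hb hc ltac:(lia); lia.
- move=> h h2; split.
  + have hm := divn_eq h 3.
    have : h %% 3 < 3 by rewrite ltn_mod.
    case: (h %% 3) hm => [|[|[|r]]] // hm _.
    * have [a [b [ha hb e hbh _]]] := Tcover (h %/ 3).
      exists (3 * a), (3 * b); rewrite /UA2; split; try lia.
      - have -> : 3 * a %/ 3 = a by lia.
        by rewrite ha andbT; apply/eqP; lia.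
      - have -> : 3 * b %/ 3 = b by lia.
        by rewrite hb andbT; apply/eqP; lia.
    * have [a [b [ha hb e hbh]]] := @Todd_strict (h %/ 3) ltac:(lia).
      exists (3 * a), (2 + 3 * b); rewrite /UA2; split; try lia.
      - have -> : 3 * a %/ 3 = a by lia.
        by rewrite ha andbT; apply/eqP; lia.
      - have -> : (2 + 3 * b) %/ 3 = b by lia.
        by rewrite hb andbT; apply/eqP; lia.
    * have [a [b [ha hb e hbh _]]] := Tcover (h %/ 3).
      exists (2 + 3 * a), (2 + 3 * b); rewrite /UA2; split; try lia.
      - have -> : (2 + 3 * a) %/ 3 = a by lia.
        by rewrite ha andbT; apply/eqP; lia.
      - have -> : (2 + 3 * b) %/ 3 = b by lia.
        by rewrite hb andbT; apply/eqP; lia.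
  + have [a [b [ha hb e hbh _]]] := Tcover (h - 2).
    exists (a + 2), (b + 2); rewrite /UD2 !addnK ha hb; split => //; lia.
  + have hm := divn_eq (h - 2) 3.
    have : (h - 2) %% 3 < 3 by rewrite ltn_mod.
    case: ((h - 2) %% 3) hm => [|[|[|r]]] // hm _.
    * have [a [b [ha hb e hbh _]]] := Tcover ((h - 2) %/ 3).
      exists (2 + 3 * a), (2 + 3 * b); rewrite /UA2 /UD2; split; try lia.
      - have -> : (2 + 3 * a) %/ 3 = a by lia.
        by rewrite ha andbT; apply/eqP; lia.
      - have -> : 2 + 3 * b - 2 = 0 + 3 * b by lia.
        by rewrite inT_rec // hb andbT; lia.
    * have [a [b [ha hb e hbh]]] := Todd ((h - 2) %/ 3).
      exists (3 * a), (3 * b + 3); rewrite /UA2 /UD2; split; try lia.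
      - have -> : 3 * a %/ 3 = a by lia.
        by rewrite ha andbT; apply/eqP; lia.
      - have -> : 3 * b + 3 - 2 = 1 + 3 * b by lia.
        by rewrite inT_rec // hb andbT; lia.
    * have [a [b [ha hb e hbh _]]] := Tcover ((h - 2) %/ 3).
      exists (3 * a), (2 + 3 * b); rewrite /UA2 /UD2; split; try lia.
      - have -> : 3 * a %/ 3 = a by lia.
        by rewrite ha andbT; apply/eqP; lia.
      - have -> : 2 + 3 * b - 2 = 0 + 3 * b by lia.
        by rewrite inT_rec // hb andbT; lia.
- by [].
- by [].
- by move=> [|[|h]].
- by move=> [|[|h]].
- by [].
- move=> p h hp hh; rewrite /UA2.
  have X0 : 0 < 3 ^ p.-1 by rewrite expn_gt0.
  have E : 3 ^ p = 3 * 3 ^ p.-1 by rewrite -expnS prednK //; lia.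
  have hh' : h %/ 3 < 3 ^ p.-1 by lia.
  have -> : (3 ^ p + h) %% 3 = h %% 3 by lia.
  have -> : (3 ^ p + h) %/ 3 = 3 ^ p.-1 + h %/ 3 by lia.
  have -> : (3 ^ p + 3 ^ p + h) %/ 3 = 3 ^ p.-1 + 3 ^ p.-1 + h %/ 3 by lia.
  by rewrite inT_p1 // inT_p2 // andbF.
- move=> p h hp hh; rewrite /UD2.
  case: p hp hh => [|[|q]] // _ hh.
  have X0 : 0 < 3 ^ q by rewrite expn_gt0.
  have E : 3 ^ q.+2 = 9 * 3 ^ q by rewrite !expnS; lia.
  rewrite E in hh *.
  case: h hh => [|[|h]] hh.
  + rewrite !addn0 /= !inT_bad1 ?andbF //; lia.
  + rewrite !addn1 /= !inT_mod2 ?andbF //; lia.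
  + have -> : 9 * 3 ^ q + h.+2 - 2 = 9 * 3 ^ q + h by lia.
    have -> : 9 * 3 ^ q + 9 * 3 ^ q + h.+2 - 2 = 9 * 3 ^ q + 9 * 3 ^ q + h by lia.
    rewrite -E inT_p1 ?inT_p2 ?andbF //; try lia.
    have -> : (1 < 3 ^ q.+2 + h.+2) = true by apply/idP; lia.
    by rewrite subn2.
- by [].
- by [].
Qed.

Unset Implicit Arguments.
Theorem theorem1 (k : nat) (F : {set {set 'I_k}}) :
  0 < k -> F != set0 -> down_closed F ->
  independent (stanley (rcons (ternary_set F) (3 ^ k))) /\
  independent (stanley (rcons (ternary_set F) (2 * 3 ^ k))).
Proof.
move=> _ F0 dc; split.
  by have := @good_indep k F _ _ _ good1 F0 dc; rewrite muln1.
by have := @good_indep k F _ _ _ good2 F0 dc; rewrite mulnC.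
Qed.
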